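(* Let $A$ be an associative algebra and $M$ an $A$-bimodule. A collection $\{ T_\alpha : M \to A \}_{\alpha \in \Omega}$ of linear maps is an $\mathcal{O}$-operator family if and only if the collection $\{ \widehat{T}_\alpha : A \oplus M \to A \oplus M \}_{\alpha \in \Omega}$, $\widehat{T}_\alpha(a,u)=(T_\alpha(u),0)$, is a Nijenhuis family on the semidirect product algebra $A \ltimes M$.
   Context: $\Omega$ is a semigroup. An $\mathcal{O}$-operator family is a collection of linear maps $T_\alpha:M\to A$ with $T_\alpha(u) \cdot T_\beta(v) = T_{\alpha\beta}(T_\alpha(u) \cdot v + u \cdot T_\beta(v))$ for all $u,v,\alpha,\beta$. A Nijenhuis family on an algebra $B$ is a collection of linear maps $N_\alpha:B\to B$ with $N_\alpha(x) N_\beta(y) = N_{\alpha \beta} ( N_\alpha (x) y + x N_\beta(y) - N_{\alpha \beta}(x y))$. $A\ltimes M$ is $A\oplus M$ with product $(a, u) \star (b, v) = (a \cdot b, a \cdot v + u \cdot b)$. *)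

(* Defs.v *)
From HB Require Import structures.
From mathcomp Require Import all_boot all_order all_algebra.
Set Implicit Arguments. Unset Strict Implicit. Unset Printing Implicit Defensive.
Import GRing.Theory.
Local Open Scope ring_scope.

Definition is_semigroup (Omega : Type) (op : Omega -> Omega -> Omega) :=
  forall a b c, op a (op b c) = op (op a b) c.

Definition is_assoc_algebra (R : fieldType) (A : lmodType R)
  (mulA : A -> A -> A) :=
  [/\ forall a, linear (mulA a),
      forall b, linear (fun a => mulA a b)
    & forall a b c, mulA a (mulA b c) = mulA (mulA a b) c].

Definition is_bimodule (R : fieldType) (A M : lmodType R)
  (mulA : A -> A -> A) (lact : A -> M -> M) (ract : M -> A -> M) :=
  ((forall a, linear (lact a)) /\ (forall u, linear (fun a => lact a u))) /\
  ((forall u, linear (ract u)) /\ (forall a, linear (fun u => ract u a))) /\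
  [/\ forall a b u, lact (mulA a b) u = lact a (lact b u),
      forall u a b, ract u (mulA a b) = ract (ract u a) b
    & forall a u b, lact a (ract u b) = ract (lact a u) b].

(* O-operator family (T_alpha linear is assumed separately). *)
Definition O_operator_family (Omega : Type) (op : Omega -> Omega -> Omega)
  (R : fieldType) (A M : lmodType R) (mulA : A -> A -> A)
  (lact : A -> M -> M) (ract : M -> A -> M) (T : Omega -> M -> A) :=
  forall (u v : M) (a b : Omega),
    mulA (T a u) (T b v) = T (op a b) (lact (T a u) v + ract u (T b v)).

Definition Nijenhuis_family (Omega : Type) (op : Omega -> Omega -> Omega)
  (R : fieldType) (B : lmodType R) (mulB : B -> B -> B) (N : Omega -> B -> B) :=
  (forall a, linear (N a)) /\
  forall (x y : B) (a b : Omega),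
    mulB (N a x) (N b y) =
    N (op a b) (mulB (N a x) y + mulB x (N b y) - N (op a b) (mulB x y)).

Definition semidirect_mul (R : fieldType) (A M : lmodType R)
  (mulA : A -> A -> A) (lact : A -> M -> M) (ract : M -> A -> M)
  (x y : (A * M)%type) : (A * M)%type :=
  (mulA x.1 y.1, lact x.1 y.2 + ract x.2 y.1).

Definition hatT (Omega : Type) (R : fieldType) (A M : lmodType R)
  (T : Omega -> M -> A) (a : Omega) (x : (A * M)%type) : (A * M)%type :=
  (T a x.2, 0).

(* Main.v *)
Require Import Defs.
From mathcomp Require Import all_boot all_order all_algebra.
Local Open Scope ring_scope.
Import GRing.Theory.

Theorem proposition2p11 (Omega : Type) (op : Omega -> Omega -> Omega)
  (R : fieldType) (A M : lmodType R)
  (mulA : A -> A -> A) (lact : A -> M -> M) (ract : M -> A -> M)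
  (T : Omega -> M -> A) :
  is_semigroup op ->
  is_assoc_algebra mulA ->
  is_bimodule mulA lact ract ->
  (forall a, linear (T a)) ->
  (O_operator_family op mulA lact ract T <->
   Nijenhuis_family op (semidirect_mul mulA lact ract) (hatT T)).
Proof.
move=> _ _ [[Hl1 _] [[_ Hr2] _]] HT.
have l0 : forall a, lact a 0 = 0.
  move=> a; have := Hl1 a 1 0 0; rewrite scaler0 addr0 scale1r => H.
  by apply: (addrI (lact a 0)); rewrite addr0 -{1}H.
have r0 : forall b, ract 0 b = 0.
  move=> b; have := Hr2 b 1 0 0; rewrite scaler0 addr0 scale1r => H.
  by apply: (addrI (ract 0 b)); rewrite addr0 -{1}H.
have T0 : forall a, T a 0 = 0.
  move=> a; have := HT a 1 0 0; rewrite scaler0 addr0 scale1r => H.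
  by apply: (addrI (T a 0)); rewrite addr0 -{1}H.
split.
- move=> HO; split.
    move=> a k x y; rewrite /hatT /=.
    by rewrite (HT a); apply: injective_projections => /=; rewrite ?scaler0 ?addr0.
  move=> [x1 u] [y1 v] a b; rewrite /hatT /semidirect_mul /=.
  by rewrite l0 r0 HO r0 l0 addr0 add0r subr0 addr0.
- move=> [_ HN] u v a b.
  have := HN (0, u) (0, v) a b; rewrite /hatT /semidirect_mul /=.
  by rewrite !l0 !r0 addr0 add0r subr0 addr0; case.
Qed.
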